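(* Let $1\le r\le m\le n$, $k\ge1$, and let $P$ be a prime ideal of $S$ minimal over $\mathcal I^{m,n}_{r,k}$. Then for any two index pairs $(i,j)$ and $(i',j')$ with $1\le i,i'\le m$, $1\le j,j'\le n$, we have $x^{(0)}_{i,j}\in P$ if and only if $x^{(0)}_{i',j'}\in P$.
   Context: Let $F$ be an algebraically closed field. For integers $1\le r\le m\le n$ and $k\ge 1$, let $S=F[x^{(l)}_{i,j}:1\le i\le m,\ 1\le j\le n,\ 0\le l\le k-1]$, the coordinate ring of $\mathbf A^{mnk}_F$, and let $X(t)$ be the $m\times n$ matrix over $S[t]/(t^k)$ with $(i,j)$ entry $x_{i,j}(t)=\sum_{l=0}^{k-1}x^{(l)}_{i,j}t^l$. Every element of $S[t]/(t^k)$ is uniquely $\sum_{l=0}^{k-1}c_lt^l$ with $c_l\in S$ (its coefficient of $t^l$). $\mathcal I^{m,n}_{r,k}\subseteq S$ is the ideal generated by the coefficients of $t^l$, $0\le l\le k-1$, of all $r\times r$ minors of $X(t)$, and $\mathcal Z^{m,n}_{r,k}\subseteq\mathbf A^{mnk}_F$ is its zero set. *)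

(* Defs.v *)
From HB Require Import structures.
From mathcomp Require Import all_boot all_order all_algebra.
From mathcomp Require Import mpoly.
Set Implicit Arguments. Unset Strict Implicit. Unset Printing Implicit Defensive.
Import Order.TTheory GRing.Theory.
Local Open Scope ring_scope.

(* Index type of the variables x^{(l)}_{i,j}: triples (i,j,l). *)
Notation vidx m n k := ('I_m * 'I_n * 'I_k)%type.

(* S = F[x^{(l)}_{i,j}], the polynomial ring in m*n*k variables, whose
   variables are enumerated by enum_rank over the finite index type. *)
Notation Sring F m n k := {mpoly F[#|{: vidx m n k}|]}.

Definition xvar (F : closedFieldType) (m n k : nat)
  (i : 'I_m) (j : 'I_n) (l : 'I_k) : Sring F m n k :=
  'X_(enum_rank ((i, j, l) : vidx m n k)).

Definition xpoly (F : closedFieldType) (m n k : nat) (i : 'I_m) (j : 'I_n)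
  : {poly Sring F m n k} :=
  \sum_(l < k) (xvar F i j l)%:P * 'X^l.

Definition Xt (F : closedFieldType) (m n k : nat) : 'M[{poly Sring F m n k}]_(m, n) :=
  \matrix_(i, j) xpoly F k i j.

(* The r x r minor of X(t) with rows f(0)<...<f(r-1), columns g(0)<...<g(r-1),
   computed in S[t]; its coefficients of t^l for l < k are exactly the
   coefficients of the minor computed in S[t]/(t^k) (truncation is a ring map). *)
Definition minorXt (F : closedFieldType) (m n k r : nat)
  (f : 'I_r -> 'I_m) (g : 'I_r -> 'I_n) : {poly Sring F m n k} :=
  \det (\matrix_(a, b) Xt F m n k (f a) (g b)).

Definition strictly_incr (r p : nat) (f : 'I_r -> 'I_p) : Prop :=
  forall a b : 'I_r, (a < b)%N -> (f a < f b)%N.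

Definition Igens (F : closedFieldType) (m n r k : nat) (p : Sring F m n k) : Prop :=
  exists (f : 'I_r -> 'I_m) (g : 'I_r -> 'I_n) (l : nat),
    [/\ strictly_incr f, strictly_incr g, (l < k)%N & p = (minorXt F k f g)`_l].

Definition ideal_gen (R : comRingType) (G : R -> Prop) (p : R) : Prop :=
  exists s : seq (R * R), (forall q, q \in s -> G q.2) /\ p = \sum_(q <- s) q.1 * q.2.

Definition Iideal (F : closedFieldType) (m n r k : nat) : Sring F m n k -> Prop :=
  ideal_gen (@Igens F m n r k).

Definition is_ideal (R : comRingType) (P : R -> Prop) : Prop :=
  [/\ P 0, (forall a b, P a -> P b -> P (a + b)) & (forall a b, P b -> P (a * b))].

Definition is_prime_ideal (R : comRingType) (P : R -> Prop) : Prop :=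
  [/\ is_ideal P, ~ P 1 & (forall a b, P (a * b) -> P a \/ P b)].

Definition subset_pred (R : Type) (A B : R -> Prop) : Prop := forall x, A x -> B x.

Definition minimal_prime_over (R : comRingType) (I P : R -> Prop) : Prop :=
  [/\ is_prime_ideal P, subset_pred I P &
      forall Q : R -> Prop, is_prime_ideal Q -> subset_pred I Q ->
        subset_pred Q P -> subset_pred P Q].

(* Main.v *)
Require Import Defs.
From mathcomp Require Import all_boot all_order all_algebra.
From mathcomp Require Import mpoly.
From mathcomp Require classical_sets.
From mathcomp Require Import ring.
From mathcomp Require Import fingroup perm.
From Stdlib Require Import Classical.
Set Implicit Arguments. Unset Strict Implicit. Unset Printing Implicit Defensive.
Import GRing.Theory.
Local Open Scope ring_scope.

Section PartA.
Variable R : comRingType.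

Lemma prime_pow (P : R -> Prop) x y N : is_prime_ideal P -> P (x * y ^+ N) -> P x \/ P y.
Proof.
move=> [_ _ hp]; elim: N x => [|N IH] x; first by rewrite expr0 mulr1; left.
rewrite exprS mulrCA => /hp [|]; first by right.
by move/IH => [] h; [left|right].
Qed.

Lemma minprime_wit (J P : R -> Prop) : is_ideal J -> minimal_prime_over J P ->
  forall a, P a -> exists s N, ~ P s /\ J (s * a ^+ N).
Proof.
move=> hJ [hP sJP hmin] a Pa.
apply: NNPP => H.
have H' : forall s N, ~ P s -> ~ J (s * a ^+ N).
  by move=> s N nPs Js; apply: H; exists s, N.
pose Tm x := exists s N, ~ P s /\ x = s * a ^+ N.
pose fam (Q : R -> Prop) := [/\ is_ideal Q, (forall x, J x -> Q x) & (forall x, Q x -> ~ Tm x)].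
pose famU (A : R -> Prop) := fam (fun x => A x \/ J x).
have hz : forall F : (R -> Prop) -> Prop, (forall X, F X -> famU X) ->
    classical_sets.total_on F (@classical_sets.subset R) ->
    famU (classical_sets.bigcup F (fun X => X)).
  move=> F sF tot; split.
  - split; first by right; case: hJ.
    + move=> x y [[X FX Xx]|Jx] [[Y FY Yy]|Jy].
      * have [XY|YX] := tot _ _ FX FY.
        - have [[_ hadd _] _ _] := sF _ FY.
          by case: (hadd x y (or_introl (XY _ Xx)) (or_introl Yy)) => [?|?]; [left; exists Y|right].
        - have [[_ hadd _] _ _] := sF _ FX.
          by case: (hadd x y (or_introl Xx) (or_introl (YX _ Yy))) => [?|?]; [left; exists X|right].
      * have [[_ hadd _] _ _] := sF _ FX.
        by case: (hadd x y (or_introl Xx) (or_intror Jy)) => [?|?]; [left; exists X|right].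
      * have [[_ hadd _] _ _] := sF _ FY.
        by case: (hadd x y (or_intror Jx) (or_introl Yy)) => [?|?]; [left; exists Y|right].
      * by right; case: hJ => _ hadd _; apply: hadd.
    + move=> x y [[Y FY Yy]|Jy].
      * have [[_ _ hmul] _ _] := sF _ FY.
        by case: (hmul x y (or_introl Yy)) => [?|?]; [left; exists Y|right].
      * by right; case: hJ => _ _ hmul; apply: hmul.
  - by move=> x Jx; right.
  - move=> x [[X FX Xx]|Jx].
      by have [_ _ hd] := sF _ FX; apply: hd; left.
    by move=> [s [N [nPs e]]]; rewrite e in Jx; exact: H' nPs Jx.
have [A [PA Amax]] := classical_sets.Zorn_bigcup hz.
pose Q x := A x \/ J x.
have [[Q0 Qadd Qmul] JQ QT] := PA.
have Qmax : forall B : R -> Prop, is_ideal B -> (forall x, Q x -> B x) -> (forall x, B x -> ~ Tm x) -> forall x, B x -> Q x.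
  move=> B hB QB BT x Bx; apply: NNPP => nQx.
  apply: (Amax B); last first.
    have BUJ : forall u, B u \/ J u -> B u by move=> u [//|Ju]; apply: QB; right.
    split; [split| |].
    + by left; case: hB.
    + by move=> u v /BUJ Bu /BUJ Bv; left; case: hB => _ h _; apply: h.
    + by move=> u v /BUJ Bv; left; case: hB => _ _ h; apply: h.
    + by move=> u Ju; right.
    + by move=> u /BUJ; apply: BT.
  split; first by move=> u Au; apply: QB; left.
  by move=> BA; apply: nQx; left; apply: BA.
have QTm : forall x, ~ Q x -> exists q r s N, [/\ Q q, ~ P s & q + r * x = s * a ^+ N].
  move=> x nQx; apply: NNPP => hno.
  pose B y := exists q r, Q q /\ y = q + r * x.
  have hB : is_ideal B.
    split; first by exists 0, 0; rewrite mul0r addr0.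
    + move=> u v [q [r [Qq ->]]] [q' [r' [Qq' ->]]]; exists (q + q'), (r + r'); split; first exact: (Qadd).
      by rewrite mulrDl; ring.
    + move=> u v [q [r [Qq ->]]]; exists (u * q), (u * r); split; first exact: (Qmul).
      by ring.
  apply: nQx; apply: (Qmax B hB).
  - by move=> y Qy; exists y, 0; rewrite mul0r addr0.
  - move=> y [q [r [Qq ->]]] [s [N [nPs e]]]; apply: hno; exists q, r, s, N; split => //.
  - by exists 0, 1; rewrite mul1r add0r; split => //.
have Q1 : ~ Q 1.
  by move=> /QT; apply; exists 1, 0%N; rewrite expr0 mulr1; split => //; case: hP.
have Qprime : is_prime_ideal Q.
  split; [by split| exact: Q1|].
  move=> x y Qxy; apply: NNPP => /not_or_and [nQx nQy].
  have [q1 [r1 [s1 [N1 [Qq1 nP1 e1]]]]] := QTm _ nQx.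
  have [q2 [r2 [s2 [N2 [Qq2 nP2 e2]]]]] := QTm _ nQy.
  apply: (QT ((q1 + r1 * x) * (q2 + r2 * y))).
    have -> : (q1 + r1 * x) * (q2 + r2 * y) = (q1 + r1 * x) * q2 + r2 * (r1 * (x * y) ) + (r2 * y) * q1.
      by ring.
    apply: (Qadd); [apply: (Qadd)|]; [exact: (Qmul)| |exact: (Qmul)]; apply: (Qmul); exact: (Qmul).
  exists (s1 * s2), (N1 + N2)%N; split.
    by case: hP => _ _ hp /hp [].
  by rewrite e1 e2 exprD; ring.
have QP : forall x, Q x -> P x.
  move=> x Qx; apply: NNPP => nPx; apply: (QT x Qx); exists x, 0%N.
  by rewrite expr0 mulr1.
have PQ := hmin Q Qprime JQ QP.
apply: (QT a (PQ a Pa)); exists 1, 1%N; rewrite mul1r expr1; split => //.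
by case: hP.
Qed.

End PartA.


Definition subm (R : Type) p q r (f : 'I_r -> 'I_p) (g : 'I_r -> 'I_q) (Y : 'M[R]_(p,q)) : 'M[R]_r :=
  \matrix_(a, b) Y (f a) (g b).

Section RowOp.
Variable R : comRingType.

Lemma rowop_det p q r (Y : 'M[R]_(p,q)) (i0 i1 : 'I_p) (c : R) (f : 'I_r -> 'I_p) (g : 'I_r -> 'I_q) :
  exists (u1 u2 : R) (f1 f2 : 'I_r -> 'I_p), [/\ u1 = 0 \/ u1 = 1, u2 = 0 \/ u2 = c &
    \det (subm f g (\matrix_(i, j) (Y i j + (if i == i1 then c * Y i0 j else 0)))) =
      u1 * \det (subm f1 g Y) + u2 * \det (subm f2 g Y)].
Proof.
set Y' := \matrix_(i, j) _.
case: (pickP (fun a => f a == i1)) => [a /eqP fa | nof]; last first.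
  exists 1, 0, f, f; split; [by right|by left|].
  rewrite mul1r mul0r addr0; congr (\det _); apply/matrixP => x y; rewrite !mxE.
  by rewrite nof addr0.
case: (pickP (fun b => (b != a) && (f b == i1))) => [b /andP [ba /eqP fb] | nob].
  exists 0, 0, f, f; split; [by left|by left|].
  rewrite !mul0r addr0; apply: (determinant_alternate ba) => y.
  by rewrite !mxE fa fb.
pose f2 x := if x == a then i0 else f x.
exists 1, c, f, f2; split; [by right|by right|].
rewrite mul1r !(expand_det_row _ a) big_distrr -big_split /=; apply: eq_bigr => j _.
have cof : forall M : 'M[R]_r, (forall x, x != a -> M x =1 subm f g Y x) -> cofactor M a j = cofactor (subm f g Y) a j.
  move=> M hM; rewrite /cofactor; congr (_ * \det _); apply/matrixP => x y.
  by rewrite !mxE hM ?mxE // eq_sym neq_lift.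
rewrite (cof (subm f g Y')); last first.
  move=> x xa y; rewrite !mxE; have := nob x; rewrite /= xa /= => ->.
  by rewrite addr0.
rewrite [cofactor (subm f2 g Y) a j]cof; last by move=> x xa y; rewrite !mxE /f2 (negbTE xa).
by rewrite !mxE fa eqxx /f2 eqxx; ring.
Qed.

End RowOp.

Section Sort.
Lemma sort_inj r p (f : 'I_r -> 'I_p) : injective f ->
  exists (s : {perm 'I_r}) (h : 'I_r -> 'I_p), strictly_incr h /\ forall a, f a = h (s a).
Proof.
move=> finj.
have rlt : forall a, (#|[set b | (f b < f a)%N]| < r)%N.
  move=> a; suff : (#|[set b | (f b < f a)%N]| < #|[set: 'I_r]|)%N by rewrite cardsT card_ord.
  apply: proper_card.
  rewrite properEneq subsetT andbT; apply/negP => /eqP e.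
  have : a \in [set b | (f b < f a)%N] by rewrite e inE.
  by rewrite inE ltnn.
pose rho a := Ordinal (rlt a).
have mono : forall a a', (f a < f a')%N -> (rho a < rho a')%N.
  move=> a a' lt; rewrite /=; apply: proper_card; rewrite properE; apply/andP; split.
    by apply/subsetP => x; rewrite !inE => /ltn_trans; apply.
  by apply/subsetPn; exists a; rewrite !inE ?lt ?ltnn.
have rinj : injective rho.
  move=> a a' e; apply: finj; apply: val_inj => /=.
  case: (ltngtP (f a) (f a')) => // lt.
    by have := mono _ _ lt; rewrite e ltnn.
  by have := mono _ _ lt; rewrite e ltnn.
exists (perm rinj), (fun x => f (((perm rinj)^-1)%g x)); split; last by move=> a; rewrite permK.
move=> a b ab.
set x := ((perm rinj)^-1)%g a; set y := ((perm rinj)^-1)%g b.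
case: (ltngtP (f x) (f y)) => // lt.
  have := mono _ _ lt; rewrite -!(permE rinj) /x /y !permKV => ba.
  by have := ltn_trans ab ba; rewrite ltnn.
have xy : x = y by apply: finj; apply: val_inj.
by have := congr1 (perm rinj) xy; rewrite /x /y !permKV => e; rewrite e ltnn in ab.
Qed.
End Sort.


Lemma ideal_sum (R : comRingType) (P : R -> Prop) (I : Type) (r : seq I) (G : I -> R) :
  is_ideal P -> (forall i, P (G i)) -> P (\sum_(i <- r) G i).
Proof.
move=> [P0 Padd _] hG; elim: r => [|x r IH]; first by rewrite big_nil.
by rewrite big_cons; apply: Padd.
Qed.

Section C.
Variable F : closedFieldType.

Lemma new_elt (s : seq F) : exists c, c != 0 /\ c \notin s.
Proof.
have : 'X * \prod_(a <- s) ('X - a%:P) != 0.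
  rewrite mulf_neq0 ?polyX_eq0 //; rewrite prodf_seq_neq0.
  by apply/allP => a _; rewrite polyXsubC_eq0.
move/closed_nonrootP => [x]; rewrite /root hornerM hornerX horner_prod mulf_eq0 negb_or.
move=> /andP [x0 hp]; exists x; split => //; apply/negP => xs.
move: hp; rewrite (big_rem x xs) /= hornerXsubC subrr mul0r eqxx //.
Qed.

Lemma many_elts (E : nat) : exists s : seq F, [/\ uniq s, size s = E & 0 \notin s].
Proof.
elim: E => [|E [s [us ss s0]]]; first by exists [::].
have [c [c0 cs]] := new_elt s.
exists (c :: s); split => //=; first by rewrite cs.
by rewrite ss.
by rewrite in_cons negb_or eq_sym c0.
Qed.

Variable N : nat.
Local Notation S := {mpoly F[N]}.

Lemma ideal_unit (P : S -> Prop) (d : F) (x : S) : is_ideal P -> d != 0 -> P (d%:MP * x) -> P x.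
Proof.
move=> [_ _ Pmul] d0 h; have := Pmul (d^-1)%:MP _ h.
by rewrite mulrA -mpolyCM mulVf // mpolyC1 mul1r.
Qed.

Lemma vand_arg (P : S -> Prop) (q : {poly S}) (cs : seq F) :
  is_ideal P -> uniq cs -> size cs = size q -> (forall c, c \in cs -> P q.[c%:MP]) -> P (q`_0).
Proof.
move=> hP ucs scs hc.
have [q0|qn0] := eqVneq q 0; first by rewrite q0 coef0; case: hP.
set E := size q.
have E0 : (0 < E)%N by rewrite size_poly_gt0.
pose a : 'rV[F]_E := \row_j cs`_j.
pose V := Vandermonde E a.
pose Vs := map_mx (@mpolyC N F) V.
pose t : 'rV[S]_E := \row_i q`_i.
have tV : forall j, (t *m Vs) 0 j = q.[(cs`_j)%:MP].
  move=> j; rewrite !mxE horner_coef; apply: eq_bigr => i _.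
  by rewrite !mxE rmorphXn.
have detV : \det V != 0.
  rewrite det_Vandermonde; apply/prodf_neq0 => i _; apply/prodf_neq0 => j ij.
  rewrite !mxE subr_eq0; apply/negP => /eqP e.
  have := ij; rewrite ltn_neqAle => /andP [/negP ne _]; apply: ne.
  by rewrite -(nth_uniq 0 _ _ ucs) ?scs ?ltn_ord // e.
have key : (\det Vs) *: t = t *m Vs *m \adj Vs by rewrite -mulmxA mul_mx_adj mul_mx_scalar.
have := congr1 (fun M : 'M[S]_(1,E) => M 0 (Ordinal E0)) key; rewrite /= [in LHS]mxE [in LHS]mxE /=.
rewrite det_map_mx /= => e.
apply: (ideal_unit hP detV); rewrite e mxE.
apply: ideal_sum => // j; rewrite tV mulrC; case: hP => _ _ hm; apply: hm.
by apply: hc; rewrite mem_nth ?scs.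
Qed.

End C.


Section Main.
Variables (F : closedFieldType) (m n k : nat).
Local Notation N := #|{: vidx m n k}|.
Local Notation S := {mpoly F[N]}.

Section Sig.
Variables (sel0 : 'I_m -> 'I_n -> bool) (pi : 'I_m -> 'I_n -> 'I_m) (pj : 'I_m -> 'I_n -> 'I_n).
Definition sel (u : vidx m n k) := sel0 u.1.1 u.1.2.
Definition part (u : vidx m n k) : vidx m n k := (pi u.1.1 u.1.2, pj u.1.1 u.1.2, u.2).
Definition hh (v : 'I_N) : {poly S} :=
  ('X_v)%:P + (if sel (enum_val v) then 'X * ('X_(enum_rank (part (enum_val v))) : S)%:P else 0).
Definition cst : {rmorphism F -> {poly S}} := (polyC \o (@mpolyC N F))%FUN.
Definition tau : {rmorphism S -> {poly S}} := mmap cst hh.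
Definition sig (c : F) : {rmorphism S -> S} := (horner_eval (c%:MP : S) \o tau)%FUN.

Arguments sig c : simpl never.
Arguments tau : simpl never.
Lemma tauX v : tau 'X_v = hh v.
Proof. by rewrite /tau /= mmapX mmap1U. Qed.

Lemma sigE c p : sig c p = (tau p).[c%:MP].
Proof. by []. Qed.

Lemma sigX c (i : 'I_m) (j : 'I_n) (l : 'I_k) :
  sig c (xvar F i j l) = xvar F i j l + (if sel0 i j then c%:MP * xvar F (pi i j) (pj i j) l else 0).
Proof.
rewrite sigE /xvar tauX /hh enum_rankK /sel /part /=.
case: (sel0 i j); rewrite ?(hornerD, hornerC, hornerM, hornerX, horner0) //.
Qed.

Lemma sigC c a : sig c a%:MP = a%:MP.
Proof. by rewrite sigE /tau /= mmapC /= hornerC. Qed.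

Lemma sig0 p : sig 0 p = p.
Proof.
rewrite {1}[p]mpolyE rmorph_sum [RHS]mpolyE; apply: eq_bigr => mm _.
rewrite -mul_mpolyC rmorphM (sigC 0 (p@_mm)); congr (_ * _).
rewrite mpolyXE_id rmorph_prod; apply: eq_bigr => v _; rewrite rmorphXn; congr (_ ^+ _).
rewrite sigE tauX /hh; case: sel; rewrite ?(hornerD, hornerC, hornerM, hornerX, horner0) //.
  by rewrite mpolyC0 mul0r addr0.
by rewrite addr0.
Qed.

Lemma map_sumC (phi : {rmorphism S -> S}) (a : 'I_k -> S) :
  map_poly phi (\sum_(l < k) (a l)%:P * 'X^l) = \sum_(l < k) (phi (a l))%:P * 'X^l.
Proof.
rewrite rmorph_sum; apply: eq_bigr => l _.
by rewrite rmorphM /= map_polyC map_polyXn.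
Qed.

Lemma map_xpoly c i j :
  map_poly (sig c) (xpoly F k i j) =
  xpoly F k i j + (if sel0 i j then (c%:MP)%:P * xpoly F k (pi i j) (pj i j) else 0).
Proof.
rewrite /xpoly map_sumC.
transitivity (\sum_(l < k) (xvar F i j l + (if sel0 i j then c%:MP * xvar F (pi i j) (pj i j) l else 0))%:P * 'X^l).
  apply: eq_bigr => l _.
  by rewrite (sigX c i j l).

case: (sel0 i j).
  rewrite big_distrr -big_split /=; apply: eq_bigr => l _.
  by rewrite polyCD polyCM mulrDl mulrA.
by rewrite addr0; apply: eq_bigr => l _; rewrite addr0.
Qed.
End Sig.
End Main.


Section E.
Variables (F : closedFieldType) (m n k r : nat).
Local Notation N := #|{: vidx m n k}|.
Local Notation S := {mpoly F[N]}.
Local Notation X := (Xt F m n k).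
Local Notation I := (@Iideal F m n r k).

Lemma I_ideal : is_ideal I.
Proof.
split.
- by exists [::]; rewrite big_nil.
- move=> a b [s1 [h1 ->]] [s2 [h2 ->]]; exists (s1 ++ s2); split; last by rewrite big_cat.
  by move=> q; rewrite mem_cat => /orP [/h1|/h2].
- move=> a b [s [h ->]]; exists [seq (a * q.1, q.2) | q <- s]; split.
    by move=> q /mapP [q' /h hq' ->].
  by rewrite big_map big_distrr; apply: eq_bigr => q _ /=; rewrite mulrA.
Qed.

Lemma I_gen p : @Igens F m n r k p -> I p.
Proof. by move=> hp; exists [:: (1, p)]; split; [move=> q; rewrite inE => /eqP ->|rewrite big_seq1 mul1r]. Qed.

Lemma I_mul a b : I b -> I (a * b).
Proof. by move=> hb; case: I_ideal => _ _ hm; exact: hm. Qed.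

Lemma I_add a b : I a -> I b -> I (a + b).
Proof. by move=> ha hb; case: I_ideal => _ hm _; exact: hm. Qed.

Lemma I0 : I 0.
Proof. by case: I_ideal. Qed.

Lemma det_row_perm q (s : {perm 'I_q}) (A : 'M[{poly S}]_q) : \det (row_perm s A) = (-1) ^+ s * \det A.
Proof. by rewrite row_permE det_mulmx det_perm. Qed.

Lemma det_col_perm q (s : {perm 'I_q}) (A : 'M[{poly S}]_q) : \det (col_perm s A) = (-1) ^+ s * \det A.
Proof. by rewrite -det_tr tr_col_perm det_row_perm det_tr. Qed.

Lemma coef_sign (b : bool) (p : {poly S}) l : I p`_l -> I ((-1) ^+ b * p)`_l.
Proof.
case: b => hp; rewrite ?expr1 ?expr0 ?mulN1r ?mul1r //.
by rewrite coefN -mulN1r; apply: I_mul.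
Qed.

Lemma gen_minor (f : 'I_r -> 'I_m) (g : 'I_r -> 'I_n) l : (l < k)%N -> I (\det (subm f g X))`_l.
Proof.
move=> lk.
have alt : forall q (h : 'I_r -> 'I_q) (A : 'M[{poly S}]_r), ~ injective h ->
    (forall a b, h a = h b -> A a =1 A b) -> \det A = 0.
  move=> q h A ninj hA; apply: NNPP => nz; apply: ninj => a b hab.
  apply/eqP; apply: contraT => ab; exfalso; apply: nz.
  exact: (determinant_alternate ab (hA _ _ hab)).
case: (boolP (injectiveb f)) => [/injectiveP finj|/injectiveP nf]; last first.
  rewrite (alt _ f _ nf) ?coef0; first exact: I0.
  by move=> a b hab y; rewrite !mxE hab.
case: (boolP (injectiveb g)) => [/injectiveP ginj|/injectiveP ng]; last first.
  rewrite -det_tr (alt _ g _ ng) ?coef0; first exact: I0.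
  by move=> a b hab y; rewrite !mxE hab.
have [s [h [hi hf]]] := sort_inj finj.
have [s' [h' [hi' hg]]] := sort_inj ginj.
have -> : subm f g X = row_perm s (col_perm s' (subm h h' X)).
  by apply/matrixP => a b; rewrite !mxE hf hg.
rewrite det_row_perm det_col_perm mulrA -exprD.
rewrite -signr_odd.
apply: coef_sign; apply: I_gen.
by exists h, h', l; split.
Qed.
End E.


Section G.
Variables (F : closedFieldType) (m n k r : nat).
Local Notation N := #|{: vidx m n k}|.
Local Notation S := {mpoly F[N]}.
Local Notation X := (Xt F m n k).
Local Notation I := (@Iideal F m n r k).

Lemma ideal_sum_in (R : comRingType) (P : R -> Prop) (T : eqType) (s : seq T) (G : T -> R) :
  is_ideal P -> (forall i, i \in s -> P (G i)) -> P (\sum_(i <- s) G i).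
Proof.
move=> [P0 Padd _]; elim: s => [|x s IH] hG; first by rewrite big_nil.
rewrite big_cons; apply: Padd; first by apply: hG; rewrite inE eqxx.
by apply: IH => i hi; apply: hG; rewrite inE hi orbT.
Qed.

Section Gen.
Variables (sel0 : 'I_m -> 'I_n -> bool) (pi : 'I_m -> 'I_n -> 'I_m) (pj : 'I_m -> 'I_n -> 'I_n).
Local Notation sg := (@sig F m n k sel0 pi pj).

Lemma sig_gens c :
  (forall (f : 'I_r -> 'I_m) (g : 'I_r -> 'I_n), exists (u1 u2 : {poly S}) (f1 f2 : 'I_r -> 'I_m) (g1 g2 : 'I_r -> 'I_n),
     [/\ u1 = 0 \/ u1 = 1, u2 = 0 \/ u2 = (c%:MP)%:P &
      \det (subm f g (map_mx (map_poly (sg c)) X)) = u1 * \det (subm f1 g1 X) + u2 * \det (subm f2 g2 X)]) ->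
  forall p, @Igens F m n r k p -> I (sg c p).
Proof.
move=> Hdet p [f [g [l [_ _ lk ->]]]].
rewrite -coef_map /minorXt.
have -> : map_poly (sg c) (\det (\matrix_(a, b) X (f a) (g b))) = \det (subm f g (map_mx (map_poly (sg c)) X)).
  rewrite -(det_map_mx (map_poly (sg c))); congr (\det _); apply/matrixP => a b; rewrite !mxE.
  done.
have [u1 [u2 [f1 [f2 [g1 [g2 [h1 h2 ->]]]]]]] := Hdet f g.
rewrite coefD; apply: I_add.
  case: h1 => ->; rewrite ?mul0r ?mul1r ?coef0; [exact: I0 | exact: gen_minor].
case: h2 => ->; rewrite ?mul0r ?coef0 ?coefCM; [exact: I0 | apply: I_mul; exact: gen_minor].
Qed.

Lemma sig_I c :
  (forall p, @Igens F m n r k p -> I (sg c p)) -> forall p, I p -> I (sg c p).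
Proof.
move=> hg p [s [hs ->]]; rewrite rmorph_sum; apply: ideal_sum_in; first exact: I_ideal.
move=> q qs; rewrite rmorphM; apply: I_mul; apply: hg; exact: hs.
Qed.
End Gen.
End G.


Section H.
Variables (F : closedFieldType) (m n k r : nat).
Local Notation N := #|{: vidx m n k}|.
Local Notation S := {mpoly F[N]}.
Local Notation X := (Xt F m n k).
Local Notation I := (@Iideal F m n r k).

Lemma row_pres (i0 i1 : 'I_m) c p : I p ->
  I (@sig F m n k (fun i _ => i == i1) (fun _ _ => i0) (fun _ j => j) c p).
Proof.
apply: sig_I; apply: sig_gens => f g.
set sg := sig _ _ _ _ c.
have -> : map_mx (map_poly sg) X =
   \matrix_(i, j) (X i j + (if i == i1 then (c%:MP)%:P * X i0 j else 0)).
  by apply/matrixP => i j; rewrite !mxE map_xpoly.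
have [u1 [u2 [f1 [f2 [h1 h2 ->]]]]] := rowop_det X i0 i1 ((c%:MP)%:P) f g.
by exists u1, u2, f1, f2, g, g.
Qed.

Lemma col_pres (j0 j1 : 'I_n) c p : I p ->
  I (@sig F m n k (fun _ j => j == j1) (fun i _ => i) (fun _ _ => j0) c p).
Proof.
apply: sig_I; apply: sig_gens => f g.
set sg := sig _ _ _ _ c.
have -> : map_mx (map_poly sg) X =
   (\matrix_(j, i) (X^T j i + (if j == j1 then (c%:MP)%:P * X^T j0 i else 0)))^T.
  by apply/matrixP => i j; rewrite !mxE map_xpoly.
have tr : forall p q (M : 'M[{poly S}]_(p, q)) (f1 : 'I_r -> 'I_q) (f2 : 'I_r -> 'I_p), subm f1 f2 M^T = (subm f2 f1 M)^T.
  by move=> p' q M f1 f2; apply/matrixP => a b; rewrite !mxE.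
rewrite tr det_tr.
have [u1 [u2 [g1 [g2 [h1 h2 ->]]]]] := rowop_det X^T j0 j1 ((c%:MP)%:P) g f.
by exists u1, u2, f, f, g1, g2; split => //; rewrite !tr !det_tr.
Qed.

Lemma transfer (sel0 : 'I_m -> 'I_n -> bool) (pi : 'I_m -> 'I_n -> 'I_m) (pj : 'I_m -> 'I_n -> 'I_n)
  (Hpres : forall c p, I p -> I (@sig F m n k sel0 pi pj c p))
  (P : S -> Prop) (hP : minimal_prime_over I P) i j l :
  sel0 i j -> P (xvar F i j l) -> P (xvar F (pi i j) (pj i j) l).
Proof.
move=> hs Pa; apply: NNPP => nPb.
have [hPp IP _] := hP.
have [[P0 Padd Pmul] P1 Pprime] := hPp.
have [s [N0 [nPs Is]]] := minprime_wit (@I_ideal F m n k r) hP Pa.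
set a := xvar F i j l in Pa Is; set b := xvar F (pi i j) (pj i j) l in nPb.
set sg := @sig F m n k sel0 pi pj.
have key : forall c, c != 0 -> P ((@tau F m n k sel0 pi pj s).[c%:MP]).
  move=> c c0; have := IP _ (Hpres c _ Is); rewrite rmorphM rmorphXn.
  rewrite [sg c a]sigX hs => /(prime_pow hPp) [//|h].
  exfalso; have : P (c%:MP * b).
    have -> : c%:MP * b = (a + c%:MP * b) + (-1) * a by ring.
    by apply: Padd => //; apply: Pmul.
  move/Pprime => [|//]; move/(Pmul (c^-1)%:MP); rewrite -mpolyCM mulVf // mpolyC1.
have [cs [ucs scs cs0]] := many_elts F (size (@tau F m n k sel0 pi pj s)).
have := vand_arg (P := P) (cs := cs) (And3 P0 Padd Pmul) ucs scs.
rewrite -horner_coef0 -mpolyC0 -sigE sig0 => h; apply: nPs; apply: h.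
move=> c cin; apply: key; apply: contraNneq cs0 => <-; exact: cin.
Qed.
End H.


Theorem proposition2p6 (F : closedFieldType) (m n r k : nat)
  (hr : (1 <= r)%N) (hrm : (r <= m)%N) (hmn : (m <= n)%N) (hk : (0 < k)%N)
  (P : Sring F m n k -> Prop)
  (hP : minimal_prime_over (@Iideal F m n r k) P) :
  forall (i i' : 'I_m) (j j' : 'I_n),
    P (xvar F i j (Ordinal hk)) <-> P (xvar F i' j' (Ordinal hk)).
Proof.
have step : forall (i i' : 'I_m) (j j' : 'I_n),
    P (xvar F i j (Ordinal hk)) -> P (xvar F i' j' (Ordinal hk)).
  move=> i i' j j' h.
  have h1 := @transfer F m n k r (fun a _ => a == i) (fun _ _ => i') (fun _ b => b)
    (fun c p => @row_pres F m n k r i' i c p) P hP i j (Ordinal hk) (eqxx i) h.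
  exact: (@transfer F m n k r (fun _ b => b == j) (fun a _ => a) (fun _ _ => j')
    (fun c p => @col_pres F m n k r j' j c p) P hP i' j (Ordinal hk) (eqxx j) h1).
by move=> i i' j j'; split; apply: step.
Qed.
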